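(* Let $R$ be a regular ring with unity and let $e_1,\dots,e_n$ be idempotents of $R$ with $e_ie_j=0$ for all $i\ne j$. Then the following are equivalent: (i) $e_1+e_2+\dots+e_n=1$; (ii) if $e$ is an idempotent of $R$ with $e_i\,\omega\,e$ for every $i=1,\dots,n$, then $e=1$.
   Context: A ring is regular if for every $x$ there is $y$ with $xyx=x$. For idempotents, $f\,\omega\,e$ means $fe=f=ef$. *)

(* Defs.v *)
From mathcomp Require Import all_boot all_order all_algebra.
Set Implicit Arguments. Unset Strict Implicit. Unset Printing Implicit Defensive.
Import GRing.Theory.
Local Open Scope ring_scope.

Definition regular_ring (R : pzRingType) : Prop :=
  forall x : R, exists y : R, x * y * x = x.

Definition idem_el (R : pzRingType) (e : R) : Prop := e * e = e.

Definition omega_rel (R : pzRingType) (f e : R) : Prop := f * e = f /\ e * f = f.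

(* Main.v *)
Require Import Defs.
From mathcomp Require Import all_boot all_order all_algebra.
Import GRing.Theory.
Local Open Scope ring_scope.

Theorem proposition4p1 (R : pzRingType) (n : nat) (e : 'I_n -> R)
  (hR : regular_ring R)
  (he : forall i, idem_el (e i))
  (horth : forall i j, i != j -> e i * e j = 0) :
  (\sum_(i < n) e i = 1) <->
  (forall f : R, idem_el f -> (forall i, omega_rel (e i) f) -> f = 1).
Proof.
have L : forall i, e i * \sum_(j < n) e j = e i.
  move=> i; rewrite mulr_sumr (bigD1 i) //= he big1 ?addr0 //.
  by move=> j ji; apply: horth; rewrite eq_sym.
have Rr : forall i, (\sum_(j < n) e j) * e i = e i.
  move=> i; rewrite mulr_suml (bigD1 i) //= he big1 ?addr0 //.
  by move=> j ji; apply: horth.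
split.
- move=> hs f _ hf.
  have : (\sum_(j < n) e j) * f = \sum_(j < n) e j.
    by rewrite mulr_suml; apply: eq_bigr => i _; case: (hf i).
  by rewrite hs mul1r.
- move=> H; apply: H.
  + by rewrite /idem_el mulr_suml; under eq_bigr do rewrite L.
  + by move=> i; split; [apply: L | apply: Rr].
Qed.
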